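(* Let $X$ be a commutative free algebra over $\mathbb{K}$ with a set of free generators $A$, and let $S\subset A$. Let $R\subset\langle S\rangle$ be a set of free generators and let $x\in X\setminus\langle S\rangle$. Then $R\cup\{x\}$ is a set of free generators.
   Context: Algebras are associative linear algebras over $\mathbb{K}$ ($\mathbb{R}$ or $\mathbb{C}$). For a subset $S$ of an algebra, $\langle S\rangle$ is the subalgebra generated by $S$; in the commutative case $\langle S\rangle=\{P(x_1,\dots,x_n): n\in\mathbb{N}, P\in\mathbb{P}_n, x_1,\dots,x_n\in S\}$, where $\mathbb{P}_n$ is the set of polynomials in $n$ variables over $\mathbb{K}$ with no constant term. In a commutative algebra, a subset $S$ is a set of free generators (SFG) if for all $n\in\mathbb{N}$, every non-zero $P\in\mathbb{P}_n$ and all pairwise distinct $x_1,\dots,x_n\in S$ we have $P(x_1,\dots,x_n)\neq0$ (equivalently, the monomials $x_1^{k_1}\cdots x_n^{k_n}$ in distinct elements of $S$ with $k_i\ge1$ form a basis of $\langle S\rangle$). $X$ is a commutative free algebra with SFG $A$ if $A$ is an SFG and $X=\langle A\rangle$. *)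

(* Defs.v *)
From mathcomp Require Import all_boot all_order all_algebra.
From mathcomp Require Import mpoly.
Set Implicit Arguments. Unset Strict Implicit. Unset Printing Implicit Defensive.
Import GRing.Theory.
Local Open Scope ring_scope.

Section FreeGen.
Context (K : fieldType) (U : comAlgType K).

Definition peval (n : nat) (P : {mpoly K[n]}) (x : 'I_n -> U) : U :=
  mmap (fun c : K => c%:A) x P.

Definition no_const (n : nat) (P : {mpoly K[n]}) : Prop := P@_0%MM = 0.

Definition gen_alg (S : U -> Prop) : U -> Prop :=
  fun y => exists (n : nat) (P : {mpoly K[n]}) (x : 'I_n -> U),
    [/\ no_const P, (forall i, S (x i)) & y = peval P x].

Definition sfg (S : U -> Prop) : Prop :=
  forall (n : nat) (P : {mpoly K[n]}) (x : 'I_n -> U),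
    no_const P -> P != 0 -> injective x -> (forall i, S (x i)) ->
    peval P x != 0.

End FreeGen.

(* Main.v *)
From Stdlib Require Import ClassicalEpsilon.
Require Import Defs.
From mathcomp Require Import all_boot all_order all_algebra.
From mathcomp Require Import mpoly.
Set Implicit Arguments. Unset Strict Implicit. Unset Printing Implicit Defensive.
Import GRing.Theory.
Local Open Scope ring_scope.

Lemma mmap1_zero n (T : comRingType) (m : 'X_{1..n}) :
  mmap1 (fun _ : 'I_n => (0 : T)) m = (m == 0%MM)%:R.
Proof.
have [->|nz] := eqVneq m 0%MM; first by rewrite mmap11.
have [i hi] : exists i, m i != 0%N.
  apply/existsP; apply: contraNT nz => /existsPn H.
  by apply/eqP/mnmP => i; rewrite mnm0E; apply/eqP; move: (H i); rewrite negbK.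
by rewrite /mmap1 (bigD1 i) //= expr0n (negbTE hi) mul0r.
Qed.

Lemma mmap_zero n (R : ringType) (T : comRingType) (f : {additive R -> T}) (p : {mpoly R[n]}) :
  mmap f (fun _ => 0) p = f p@_0%MM.
Proof.
rewrite /mmap (eq_bigr (fun m => if m == 0%MM then f p@_0%MM else 0)); last first.
  by move=> m _; rewrite mmap1_zero; case: eqP => [->|]; rewrite ?mulr1 ?mulr0.
case: (boolP (0%MM \in msupp p)) => h.
  rewrite (big_rem 0%MM) //= eqxx big_seq big1 ?addr0 // => m.
  by rewrite mem_rem_uniq ?msupp_uniq // inE => /andP[/negbTE -> _].
by rewrite big_seq big1 ?(memN_msupp_eq0 h) ?raddf0 // => m hm; case: eqP hm h => // -> ->.
Qed.
Lemma mmap_ext n (R T : ringType) (f1 f2 : R -> T) (h1 h2 : 'I_n -> T) (p : {mpoly R[n]}) :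
  f1 =1 f2 -> h1 =1 h2 -> mmap f1 h1 p = mmap f2 h2 p.
Proof.
move=> ef eh; rewrite /mmap; apply: eq_bigr => m _.
by rewrite ef (mmap1_eq _ eh).
Qed.
Lemma mmap_morph n (R T1 T2 : ringType) (f : R -> T1) (h : 'I_n -> T1)
   (F : {rmorphism T1 -> T2}) (p : {mpoly R[n]}) :
  F (mmap f h p) = mmap (F \o f) (F \o h) p.
Proof.
rewrite /mmap rmorph_sum; apply: eq_bigr => m _.
rewrite rmorphM rmorph_prod /mmap1; congr (_ * _); apply: eq_bigr => i _.
by rewrite rmorphXn.
Qed.
Lemma mmapXU n (R T : ringType) (f : {rmorphism R -> T}) (h : 'I_n -> T) i :
  mmap f h 'X_i = h i.
Proof. by rewrite mmapX mmap1U. Qed.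

Lemma mmap_id n (R : ringType) (p : {mpoly R[n]}) :
  mmap (@mpolyC n R) (fun i => 'X_i) p = p.
Proof.
rewrite -[RHS]comp_mpoly_id /comp_mpoly; apply: mmap_ext => // i.
by rewrite tnth_mktuple.
Qed.

Section Core.
Variable K : fieldType.

Lemma mcoeff0_mmap m k (g : 'I_k -> {mpoly K[m]}) (p : {mpoly K[k]}) :
  (forall i, (g i)@_0%MM = 0) -> (mmap (@mpolyC m K) g p)@_0%MM = p@_0%MM.
Proof.
move=> hg.
have E (r : {mpoly K[m]}) : r@_0%MM = meval (fun _ => 0) r.
  by rewrite /meval mmap_zero.
rewrite E mmap_morph -[RHS](@mmap_zero _ _ _ idfun).
by apply: mmap_ext => [c|i] /=; rewrite ?mevalC // -E hg.
Qed.


Section CoreLemma.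
Variables (m n : nat) (j : 'I_n.+1) (sS : 'I_m -> bool).
Variable q : 'I_n.+1 -> {mpoly K[m]}.
Local Notation D := {mpoly K[m]}.
Definition phiX (l : 'I_m) : {poly D} := if sS l then ('X_l)%:P else ('X_l)%:P * 'X.
Local Notation phi := (mmap (polyC \o @mpolyC m K) phiX).

Hypothesis hq0 : forall i, (q i)@_0%MM = 0.
Hypothesis hqS : forall i, i != j -> phi (q i) = (q i)%:P.
Hypothesis hqj : (1 < size (phi (q j)))%N.
Hypothesis hR : forall P' : {mpoly K[n]}, P'@_0%MM = 0 ->
  mmap (@mpolyC m K) (q \o lift j) P' = 0 -> P' = 0.

Local Notation Q := (mmap (@mpolyC m K) q).
Definition theta (i : 'I_n.+1) : {poly {mpoly K[n.+1]}} :=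
  if i == j then 'X else ('X_i)%:P.
Local Notation Theta := (mmap (polyC \o @mpolyC n.+1 K) theta).

Lemma core (P : {mpoly K[n.+1]}) : Q P = 0 -> P = 0.
Proof.
move=> QP0.
have Ha : Theta P = 0 -> P = 0.
  move=> H; have := congr1 (horner_eval ('X_j : {mpoly K[n.+1]})) H.
  rewrite mmap_morph rmorph0 => <-.
  rewrite -[LHS]mmap_id; apply: mmap_ext => [c|i] /=.
    by rewrite horner_evalE hornerC.
  by rewrite /theta horner_evalE; case: eqP => [->|_]; rewrite ?hornerX ?hornerC.
pose w := phi (q j).
have Hb : phi (Q P) = (map_poly Q (Theta P)) \Po w.
  have -> : (map_poly Q (Theta P)) \Po w = (comp_poly w \o map_poly Q) (Theta P) by [].
  rewrite !mmap_morph; apply: mmap_ext => [c|i] /=.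
    by rewrite map_polyC /= mmapC comp_polyC mmapC.
  rewrite /theta; case: eqP => [->|/eqP ne].
    by rewrite map_polyX comp_polyX.
  by rewrite map_polyC /= mmapXU comp_polyC hqS.
have Hc : map_poly Q (Theta P) = 0.
  apply/eqP; rewrite -(comp_poly_eq0 _ hqj) -/w -Hb QP0.
  by rewrite raddf0.
apply: Ha; apply/polyP => k; rewrite coef0.
pose c := (Theta P)`_k.
have Qc : Q c = 0 by rewrite -coef_map Hc coef0.
pose rho := mmap (@mpolyC n.+1 K) (fun i => if i == j then 0 else 'X_i).
have Hrho : rho c = c.
  have E : map_poly rho (Theta P) = Theta P.
    rewrite mmap_morph; apply: mmap_ext => [c'|i] /=.
      by rewrite map_polyC /= mmapC.
    rewrite /theta; case: ifP => h; first by rewrite map_polyX.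
    by rewrite map_polyC /= mmapXU h.
  by rewrite /c -[in RHS]E coef_map.
pose P' : {mpoly K[n]} :=
  mmap (@mpolyC n K) (fun i => if unlift j i is Some i' then 'X_i' else 0) c.
pose ren := mmap (@mpolyC n.+1 K) (fun i' => 'X_(lift j i')).
have HP' : ren P' = c.
  rewrite -[RHS]Hrho /ren /P' mmap_morph; apply: mmap_ext => [c'|i] /=.
    by rewrite mmapC.
  case: unliftP => [i' ->|->]; last by rewrite eqxx raddf0.
  by rewrite mmapXU eq_sym (negbTE (neq_lift _ _)).
have HQ : mmap (@mpolyC m K) (q \o lift j) P' = 0.
  have -> : mmap (@mpolyC m K) (q \o lift j) P' = Q (ren P').
    rewrite /ren [RHS]mmap_morph; apply: mmap_ext => [c'|i] /=.
      by rewrite mmapC.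
    by rewrite mmapXU.
  by rewrite HP' Qc.
have HP'0 : P'@_0%MM = 0.
  by rewrite -(mcoeff0_mmap P' (g := q \o lift j)) ?HQ ?mcoeff0 // => i /=.
by rewrite -/c -HP' (hR HP'0 HQ) /ren raddf0.
Qed.
End CoreLemma.
End Core.


Lemma mcoeffXU0 n (i : 'I_n) (K : ringType) : ('X_i : {mpoly K[n]})@_0%MM = 0.
Proof. rewrite mcoeffX; case: eqP => // /mnmP/(_ i). by rewrite mnm1E mnm0E eqxx. Qed.

Lemma pevalE (K : fieldType) (U : comAlgType K) n (P : {mpoly K[n]}) (x : 'I_n -> U) :
  peval P x = mmap (in_alg U) x P.
Proof. by []. Qed.

Theorem lemma4p2 (K : fieldType) (U : comAlgType K)
  (A S R : U -> Prop) (x : U) :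
  sfg A ->
  (forall a, S a -> A a) ->
  (forall r, R r -> gen_alg S r) ->
  sfg R ->
  gen_alg A x ->
  ~ gen_alg S x ->
  sfg (fun y => R y \/ y = x).
Proof.
move=> hA hSA hRS hR hx hxS n P y hP0 hPnz hinj hy.
have [/existsP [j /eqP yj]|nox] := boolP [exists i, y i == x]; last first.
  apply: hR => // i; case: (hy i) => // yi; move/existsPn: nox => /(_ i).
  by rewrite yi eqxx.
have hyR : forall i, i != j -> R (y i).
  move=> i ne; case: (hy i) => // yi; move: ne; rewrite -(inj_eq hinj) yi yj eqxx.
  by [].
destruct n as [|n]; first by have := ltn_ord j.
pose Prep i (z : {k : nat & ({mpoly K[k]} * ('I_k -> U))%type}) :=
  [/\ no_const (projT2 z).1, (forall l, A ((projT2 z).2 l)),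
      (i != j -> forall l, S ((projT2 z).2 l)) & y i = peval (projT2 z).1 (projT2 z).2].
have Hrep : forall i, exists z, Prep i z.
  move=> i; case: (eqVneq i j) => [eij|hij].
    rewrite eij.
    case: hx => k [Q [f [h1 h2 h3]]]; exists (existT _ k (Q, f)); split => //=.
      by rewrite eqxx.
    by rewrite yj.
  case: (hRS _ (hyR i hij)) => k [Q [f [h1 h2 h3]]]; exists (existT _ k (Q, f)).
  by split => //= l; apply: hSA.
pose rep i := proj1_sig (constructive_indefinite_description _ (Hrep i)).
have repP i : Prep i (rep i) := proj2_sig (constructive_indefinite_description _ (Hrep i)).
pose ki i := projT1 (rep i).
pose Qi i : {mpoly K[ki i]} := (projT2 (rep i)).1.
pose fi i : 'I_(ki i) -> U := (projT2 (rep i)).2.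
pose L := undup (flatten [seq [seq fi i l | l <- enum 'I_(ki i)] | i <- enum 'I_n.+1]).
have memL : forall i l, fi i l \in L.
  move=> i l; rewrite mem_undup; apply/flattenP.
  exists [seq fi i l | l <- enum 'I_(ki i)]; last by apply: map_f; rewrite mem_enum.
  by apply: (map_f (fun i => [seq fi i l | l <- enum 'I_(ki i)])); rewrite mem_enum.
pose m := size L.
pose b (l : 'I_m) : U := nth 0 L l.
have binj : injective b.
  move=> l1 l2; rewrite /b => /eqP; rewrite nth_uniq ?undup_uniq // => /eqP.
  exact: val_inj.
have bA : forall l, A (b l).
  move=> l; have : b l \in L by apply: mem_nth.
  rewrite mem_undup => /flattenP [s /mapP [i _ ->] /mapP [l' _ ->]].
  by have [_ H _ _] := repP i; apply: H.
pose g i l : 'I_m := Ordinal (etrans (index_mem _ _) (memL i l)).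
have bg : forall i l, b (g i l) = fi i l by move=> i l; rewrite /b nth_index.
pose q i : {mpoly K[m]} := mmap (@mpolyC m K) (fun l => 'X_(g i l)) (Qi i).
pose sS (l : 'I_m) : bool := if excluded_middle_informative (S (b l)) then true else false.
have sSP : forall l, sS l <-> S (b l).
  by move=> l; rewrite /sS; case: excluded_middle_informative.
have peq : forall i, mmap (in_alg U) b (q i) = y i.
  move=> i; rewrite /q mmap_morph; have [_ _ _ ->] := repP i; rewrite pevalE.
  by apply: mmap_ext => [c|l] /=; [rewrite mmapC | rewrite mmapXU bg].
have hq0 : forall i, (q i)@_0%MM = 0.
  move=> i; rewrite /q mcoeff0_mmap => [|l]; last exact: mcoeffXU0.
  by have [H _ _ _] := repP i.
pose phi := mmap (polyC \o @mpolyC m K) (phiX K sS).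
have hqS : forall i, i != j -> phi (q i) = (q i)%:P.
  move=> i hij; rewrite /phi /q !mmap_morph; apply: mmap_ext => [c|l] /=.
    by rewrite mmapC.
  rewrite mmapXU /phiX; case: ifP => // /negbT/negP []; apply/sSP; rewrite bg.
  have [_ _ H _] := repP i; exact: (H hij l).
have hR' : forall P' : {mpoly K[n]}, P'@_0%MM = 0 ->
    mmap (@mpolyC m K) (q \o lift j) P' = 0 -> P' = 0.
  move=> P' h0 h; apply/eqP; apply: contraT => nz.
  have := hR _ P' (y \o lift j) h0 nz (inj_comp hinj (@lift_inj _ j)).
  have -> : peval P' (y \o lift j) = 0.
    rewrite pevalE -[LHS](_ : mmap (in_alg U) b (mmap (@mpolyC m K) (q \o lift j) P') = _).
      by rewrite h raddf0.
    by rewrite mmap_morph; apply: mmap_ext => [c|i] /=; rewrite ?mmapC ?peq.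
  rewrite eqxx; apply => i0 /=; apply: hyR.
  by rewrite eq_sym neq_lift.
have hqj : (1 < size (phi (q j)))%N.
  rewrite ltnNge; apply/negP => hs; apply: hxS.
  pose psi := mmap (@mpolyC m K) (fun l => if sS l then 'X_l else 0).
  have e1 : (phi (q j)).[1] = q j.
    rewrite -horner_evalE mmap_morph -[RHS]mmap_id.
    apply: mmap_ext => [c|l] /=; rewrite horner_evalE ?hornerC // /phiX.
    by case: ifP => _; rewrite ?hornerMX hornerC ?mulr1.
  have e0 : (phi (q j)).[0] = psi (q j).
    rewrite -horner_evalE mmap_morph.
    apply: mmap_ext => [c|l] /=; rewrite horner_evalE ?hornerC // /phiX.
    by case: ifP => _; rewrite ?hornerMX hornerC ?mulr0.
  have qjE : q j = psi (q j) by rewrite -[LHS]e1 -e0 (size1_polyC hs) !hornerC.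
  have xV : x = mmap (in_alg U) (fun l => if sS l then b l else 0) (q j).
    rewrite -yj -peq {1}qjE /psi mmap_morph; apply: mmap_ext => [c|l] /=.
      by rewrite mmapC.
    by case: ifP => _; rewrite ?mmapXU ?raddf0.
  have psi0 : no_const (psi (q j)).
    rewrite /no_const /psi mcoeff0_mmap // => l.
    by case: ifP => _; rewrite ?mcoeffXU0 ?mcoeff0.
  case: (excluded_middle_informative (exists s0, S s0)) => [[s0 hs0]|noS].
    pose b3 l := if sS l then b l else s0.
    exists m, (psi (q j)), b3; split => //.
      by move=> l; rewrite /b3; case: ifP => // /sSP.
    rewrite xV pevalE /psi [RHS]mmap_morph; apply: mmap_ext => [c|l] /=.
      by rewrite mmapC.
    by rewrite /b3; case: ifP => h; rewrite ?mmapXU ?h // raddf0.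
  have sSF : forall l, sS l = false.
    by move=> l; apply/negP => /sSP h; apply: noS; exists (b l).
  exists 0%N, 0, (fun _ => 0); split.
  - by rewrite /no_const mcoeff0.
  - by case.
  rewrite xV pevalE raddf0 (@mmap_ext _ _ _ _ (in_alg U) _ (fun _ => 0)) => // [|l].
    by rewrite mmap_zero hq0 raddf0.
  by rewrite sSF.
have HQ : peval P y = peval (mmap (@mpolyC m K) q P) b.
  rewrite !pevalE mmap_morph; apply: mmap_ext => [c|i] /=; by rewrite ?mmapC ?peq.
rewrite HQ; apply: hA => //.
  by rewrite /no_const mcoeff0_mmap.
apply: contra hPnz => /eqP H; apply/eqP; exact: (core hq0 hqS hqj hR' H).
Qed.
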